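(* Let $q\ge1$. For every closed planar $C^2$ curve $\bm\gamma$ it holds that $$\int_{\bm\gamma}|\kappa_{\bm\gamma}|^q\,d\mathcal H^1\ge(\mathrm{diam}\,\bm\gamma)^{1-q},$$ where $\kappa_{\bm\gamma}$ denotes the curvature of $\bm\gamma$. *)

(* Defs.v *)
From HB Require Import structures.
From mathcomp Require Import all_boot all_order all_algebra.
From mathcomp Require Import all_classical all_reals all_analysis.
Set Implicit Arguments. Unset Strict Implicit. Unset Printing Implicit Defensive.
Import Order.TTheory GRing.Theory Num.Theory.
Import numFieldNormedType.Exports.
Local Open Scope classical_set_scope.
Local Open Scope ring_scope.

Definition speed (R : realType) (x y : R -> R) (t : R) : R :=
  Num.sqrt (derive1 x t ^+ 2 + derive1 y t ^+ 2).

Definition curvature (R : realType) (x y : R -> R) (t : R) : R :=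
  (derive1 x t * derive1n 2 y t - derive1 y t * derive1n 2 x t)
    / speed x y t ^+ 3.

Definition curve_dist (R : realType) (x y : R -> R) (s t : R) : R :=
  Num.sqrt ((x s - x t) ^+ 2 + (y s - y t) ^+ 2).

Definition curve_diam (R : realType) (x y : R -> R) : R :=
  sup [set d | exists s t, d = curve_dist x y s t].

(* gamma = (x,y) is a closed regular C^2 planar curve, parametrized
   T-periodically (one period [0,T] traces the closed curve once). *)
Definition closed_regular_C2_curve (R : realType) (x y : R -> R) (T : R) : Prop :=
  0 < T /\
  (forall t, x (t + T) = x t /\ y (t + T) = y t) /\
  (forall t, derivable x t 1 /\ derivable y t 1) /\
  (forall t, derivable (derive1 x) t 1 /\ derivable (derive1 y) t 1) /\
  (continuous (derive1n 2 x) /\ continuous (derive1n 2 y)) /\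
  (forall t, derive1 x t ^+ 2 + derive1 y t ^+ 2 != 0).

(* int_gamma |kappa|^q dH^1  (arclength integral over one period). *)
Definition curvature_energy (R : realType) (x y : R -> R) (T q : R) : \bar R :=
  let D : set R := `[(0:R), T]%classic in
  (\int[lebesgue_measure]_(t in D) ((powR `|curvature x y t| q) * speed x y t)%:E)%E.

(* Main.v *)
Require Import Defs.
From HB Require Import structures.
From mathcomp Require Import all_boot all_order all_algebra.
From mathcomp Require Import all_classical all_reals all_analysis.
From mathcomp Require Import measurable_realfun.
From mathcomp Require Import ring lra.
Set Implicit Arguments. Unset Strict Implicit. Unset Printing Implicit Defensive.
Import Order.TTheory GRing.Theory Num.Theory.
Import numFieldNormedType.Exports.
Local Open Scope classical_set_scope.
Local Open Scope ring_scope.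

Section Core.
Variable R : realType.
Variables x y : R -> R.
Hypothesis dx : forall t, derivable x t 1.
Hypothesis dy : forall t, derivable y t 1.
Hypothesis ddx : forall t, derivable (derive1 x) t 1.
Hypothesis ddy : forall t, derivable (derive1 y) t 1.
Hypothesis cx2 : continuous (derive1n 2 x).
Hypothesis cy2 : continuous (derive1n 2 y).
Hypothesis D0 : forall t, derive1 x t ^+ 2 + derive1 y t ^+ 2 != 0.

Let X1 : R -> R := derive1 x.
Let Y1 : R -> R := derive1 y.
Let X2 : R -> R := derive1 (derive1 x).
Let Y2 : R -> R := derive1 (derive1 y).

Lemma der_cont (f : R -> R) t : derivable f t 1 -> {for t, continuous f}.
Proof. by move=> h; apply/differentiable_continuous/derivable1_diffP. Qed.

Let cX1 : continuous X1. Proof. by move=> t; apply: der_cont. Qed.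
Let cY1 : continuous Y1. Proof. by move=> t; apply: der_cont. Qed.
Let cX2 : continuous X2. Proof. exact: cx2. Qed.
Let cY2 : continuous Y2. Proof. exact: cy2. Qed.

Let D (t : R) : R := X1 t ^+ 2 + Y1 t ^+ 2.
Let D_gt0 t : 0 < D t.
Proof. by rewrite lt_def D0 addr_ge0 // sqr_ge0. Qed.
Let s (t : R) : R := speed x y t.
Let sE t : s t = Num.sqrt (D t). Proof. by []. Qed.
Let s_gt0 t : 0 < s t. Proof. by rewrite sE sqrtr_gt0. Qed.
Let s2 t : s t ^+ 2 = D t. Proof. by rewrite sE sqr_sqrtr // ltW. Qed.
Let P (t : R) : R := X1 t * X2 t + Y1 t * Y2 t.
Let C (t : R) : R := X1 t * Y2 t - Y1 t * X2 t.

Lemma cont_sqr (f : R -> R) : continuous f -> continuous (fun t => f t ^+ 2).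
Proof.
move=> cf t; have -> : (fun t => f t ^+ 2) = f \* f by apply/funext => z; rewrite expr2.
exact: (continuousM (cf t) (cf t)).
Qed.

Lemma cont_add (f g : R -> R) : continuous f -> continuous g -> continuous (fun t => f t + g t).
Proof. by move=> cf cg t; exact: (continuousD (cf t) (cg t)). Qed.

Lemma cont_mul (f g : R -> R) : continuous f -> continuous g -> continuous (fun t => f t * g t).
Proof. by move=> cf cg t; exact: (continuousM (cf t) (cg t)). Qed.

Lemma cont_sub (f g : R -> R) : continuous f -> continuous g -> continuous (fun t => f t - g t).
Proof. by move=> cf cg t; exact: (continuousB (cf t) (cg t)). Qed.

Lemma isd_add (f g : R -> R) (t a b : R) : is_derive t 1 f a -> is_derive t 1 g b ->
  is_derive t 1 (fun z => f z + g z) (a + b).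
Proof. by move=> hf hg; exact: (is_deriveD hf hg). Qed.

Lemma isd_sub (f g : R -> R) (t a b : R) : is_derive t 1 f a -> is_derive t 1 g b ->
  is_derive t 1 (fun z => f z - g z) (a - b).
Proof. by move=> hf hg; exact: (is_deriveB hf hg). Qed.

Lemma isd_mul (f g : R -> R) (t a b : R) : is_derive t 1 f a -> is_derive t 1 g b ->
  is_derive t 1 (fun z => f z * g z) (f t * b + g t * a).
Proof. by move=> hf hg; exact: (is_deriveM hf hg). Qed.

Lemma isd_cmul (f : R -> R) (t c a : R) : is_derive t 1 f a ->
  is_derive t 1 (fun z => c * f z) (c * a).
Proof.
move=> hf; exact: (is_deriveZ c hf).
Qed.

Lemma isd_sq (f : R -> R) (t a : R) : is_derive t 1 f a ->
  is_derive t 1 (fun z => f z ^+ 2) (2 * f t * a).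
Proof.
move=> hf; have -> : (fun z => f z ^+ 2) = (fun z => f z * f z).
  by apply/funext => z; rewrite expr2.
have h := isd_mul hf hf.
apply: is_derive_eq h _.
ring.
Qed.

Lemma isd_inv (f : R -> R) (t a : R) : f t != 0 -> is_derive t 1 f a ->
  is_derive t 1 (fun z => (f z)^-1) (- a / f t ^+ 2).
Proof.
move=> h0 hf; have h := is_deriveV h0 hf.
apply: is_derive_eq h _.
by rewrite /GRing.scale /= mulrC mulNr mulrN.
Qed.

Lemma isd_d1 (f : R -> R) (t : R) : derivable f t 1 -> is_derive t 1 f (derive1 f t).
Proof. by move=> h; rewrite derive1E; exact: derivableP. Qed.

Let cD : continuous D.
Proof. exact: (cont_add (cont_sqr cX1) (cont_sqr cY1)). Qed.

Let cs : continuous s.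
Proof. move=> t; rewrite /s /speed.
apply: continuous_comp; [exact: cD | exact: sqrt_continuous]. Qed.

Let is_derive_s (t : R) : is_derive t 1 s (P t / s t).
Proof.
have hD : is_derive t 1 D (2 * P t).
  have h : is_derive t 1 D (2 * X1 t * X2 t + 2 * Y1 t * Y2 t).
    exact: (isd_add (isd_sq (isd_d1 (@ddx t))) (isd_sq (isd_d1 (@ddy t)))).
  have e : 2 * X1 t * X2 t + 2 * Y1 t * Y2 t = 2 * P t.
    by rewrite /P; move: (X1 t) (X2 t) (Y1 t) (Y2 t) => a b c d; ring.
  exact: (is_derive_eq h e).
have h := @is_derive1_comp _ (@Num.sqrt R) D t _ _ (is_derive1_sqrt (D_gt0 t)) hD.
apply: is_derive_eq h _.
rewrite -/(D t) -sE; have := s_gt0 t; move: (s t) => r r0; field; lra.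
Qed.


Let e1 (t : R) : R := X1 t / s t.
Let e2 (t : R) : R := Y1 t / s t.
Let e_unit t : e1 t ^+ 2 + e2 t ^+ 2 = 1.
Proof.
rewrite /e1 /e2 !expr_div_n -mulrDl -/(D t) -s2 divff //.
by rewrite expf_neq0 // gt_eqF.
Qed.

Let s_neq0 t : s t != 0. Proof. by rewrite gt_eqF. Qed.

Let is_derive_e1 (t : R) : is_derive t 1 e1 (- (Y1 t * C t) / s t ^+ 3).
Proof.
have h := isd_mul (isd_d1 (@ddx t)) (isd_inv (s_neq0 t) (is_derive_s t)).
apply: is_derive_eq h _.
have -> : X1 t * (- (P t / s t) / s t ^+ 2) + (s t)^-1 * derive1 X1 t
   = (X2 t * s t ^+ 2 - X1 t * P t) / s t ^+ 3.
  by rewrite /X2; field; rewrite s_neq0.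
by rewrite s2 /D /P /C; field; rewrite s_neq0.
Qed.

Let is_derive_e2 (t : R) : is_derive t 1 e2 (X1 t * C t / s t ^+ 3).
Proof.
have h := isd_mul (isd_d1 (@ddy t)) (isd_inv (s_neq0 t) (is_derive_s t)).
apply: is_derive_eq h _.
have -> : Y1 t * (- (P t / s t) / s t ^+ 2) + (s t)^-1 * derive1 Y1 t
   = (Y2 t * s t ^+ 2 - Y1 t * P t) / s t ^+ 3.
  by rewrite /Y2; field; rewrite s_neq0.
by rewrite s2 /D /P /C; field; rewrite s_neq0.
Qed.

Let hh (u1 u2 : R) (t : R) : R := u1 * e1 t + u2 * e2 t.

Let is_derive_hh u1 u2 (t : R) :
  is_derive t 1 (hh u1 u2) (C t * (u2 * X1 t - u1 * Y1 t) / s t ^+ 3).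
Proof.
have h := isd_add (isd_cmul u1 (is_derive_e1 t)) (isd_cmul u2 (is_derive_e2 t)).
apply: is_derive_eq h _.
by field; rewrite s_neq0.
Qed.

Let k (t : R) : R := `|curvature x y t| * s t.
Let curvE t : curvature x y t = C t / s t ^+ 3. Proof. by []. Qed.

Let hh_bound u1 u2 t :
  `|C t * (u2 * X1 t - u1 * Y1 t) / s t ^+ 3| <= Num.sqrt (u1 ^+ 2 + u2 ^+ 2) * k t.
Proof.
rewrite /k curvE mulrAC normrM [X in _ <= X]mulrC -mulrA ler_wpM2l //.
have -> : `|u2 * X1 t - u1 * Y1 t| = Num.sqrt ((u2 * X1 t - u1 * Y1 t) ^+ 2).
  by rewrite sqrtr_sqr.
rewrite sE -sqrtrM ?addr_ge0 ?sqr_ge0 // ler_sqrt; last first.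
  by rewrite mulr_ge0 // addr_ge0 // sqr_ge0.
rewrite /D; have := sqr_ge0 (u1 * X1 t + u2 * Y1 t); nra.
Qed.


Lemma ltrDl_helper (t : R) : t < t + 1. Proof. by rewrite ltrDl. Qed.

Lemma FTCg (f : R -> R) : continuous f -> forall t : R, -1 < t ->
  is_derive t 1 (fun z => Rintegral lebesgue_measure `[-1, z] f) (f t).
Proof.
move=> cf t t1.
have int1 : lebesgue_measure.-integrable `[-1, t + 1] (EFin \o f).
  apply: continuous_compact_integrable; first exact: segment_compact.
  exact: continuous_subspaceT.
have [h1 h2] := @continuous_FTC1_closed R f (-1) t (t + 1) (ltrDl_helper t) int1 t1 (cf t).
rewrite -h2 derive1E; exact: derivableP.
Qed.

Let cC : continuous C.
Proof. exact: (cont_sub (cont_mul cX1 cY2) (cont_mul cY1 cX2)). Qed.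

Lemma cont_inv (f : R -> R) : continuous f -> (forall t, f t != 0) ->
  continuous (fun t => (f t)^-1).
Proof. by move=> cf f0 t; exact: (continuousV (f0 t) (cf t)). Qed.

Lemma cont_norm (f : R -> R) : continuous f -> continuous (fun t => `|f t|).
Proof. by move=> cf t; apply: continuous_comp; [exact: cf|exact: norm_continuous]. Qed.

Let ccurv : continuous (curvature x y).
Proof.
have -> : curvature x y = (fun t => C t * (s t ^+ 2 * s t)^-1).
  by apply/funext => t; rewrite curvE exprSr.
apply: cont_mul; first exact: cC.
apply: cont_inv; first exact: (cont_mul (cont_sqr cs) cs).
by move=> t; rewrite mulf_neq0 // expf_neq0.
Qed.

Let ck : continuous k.
Proof. exact: (cont_mul (cont_norm ccurv) cs). Qed.


Lemma mvt_lt (f df : R -> R) (a b : R) : a < b ->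
  (forall z, a <= z <= b -> is_derive z 1 f (df z)) ->
  exists2 c, a < c < b & f b - f a = df c * (b - a).
Proof.
move=> ab hd.
have hc : {within `[a, b], continuous f}.
  apply: derivable_within_continuous => z; rewrite in_itv /= => hz.
  by have [] := hd z hz.
have hd2 : forall z, z \in `]a, b[ -> is_derive z 1 f (df z).
  by move=> z; rewrite in_itv /= => /andP [h1 h2]; apply: hd; rewrite !ltW.
have [c hc2 e] := @MVT R f df a b ab hd2 hc.
by move: hc2; rewrite in_itv /= => hc2; exists c.
Qed.

Lemma mono_le (f df : R -> R) (a b : R) : a <= b ->
  (forall z, a <= z <= b -> is_derive z 1 f (df z)) ->
  (forall z, a < z < b -> 0 <= df z) -> f a <= f b.
Proof.
rewrite le_eqVlt => /predU1P [-> //|ab] hd hp.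
have [c hc e] := mvt_lt ab hd.
by rewrite -subr_ge0 e mulr_ge0 // ?hp // subr_ge0 ltW.
Qed.

Lemma mono_lt (f df : R -> R) (a b : R) : a < b ->
  (forall z, a <= z <= b -> is_derive z 1 f (df z)) ->
  (forall z, a < z < b -> 0 < df z) -> f a < f b.
Proof.
move=> ab hd hp.
have [c hc e] := mvt_lt ab hd.
by rewrite -subr_gt0 e mulr_gt0 // ?hp // subr_gt0.
Qed.

Let K (t : R) : R := Rintegral lebesgue_measure `[-1, t] k.
Let Lc (t : R) : R := Rintegral lebesgue_measure `[-1, t] s.
Let dK (t : R) : -1 < t -> is_derive t 1 K (k t). Proof. exact: FTCg ck t. Qed.
Let dL (t : R) : -1 < t -> is_derive t 1 Lc (s t). Proof. exact: FTCg cs t. Qed.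

Let k_ge0 t : 0 <= k t. Proof. by rewrite /k mulr_ge0 // ltW. Qed.

Let K_mono a b : -1 < a -> a <= b -> K a <= K b.
Proof.
move=> a1 ab; apply: (mono_le ab) => [z /andP [h1 h2]|z _]; last exact: k_ge0.
by apply: dK; apply: lt_le_trans h1.
Qed.

Let hh_lip u1 u2 a b : -1 < a -> a <= b ->
  `|hh u1 u2 b - hh u1 u2 a| <= Num.sqrt (u1 ^+ 2 + u2 ^+ 2) * (K b - K a).
Proof.
move=> a1 ab; set c := Num.sqrt _.
have hd z : a <= z <= b -> -1 < z by case/andP => h1 _; apply: lt_le_trans h1.
have h1 : hh u1 u2 a + c * K a <= hh u1 u2 b + c * K b.
  apply: (@mono_le (fun z => hh u1 u2 z + c * K z)
    (fun z => C z * (u2 * X1 z - u1 * Y1 z) / s z ^+ 3 + c * k z) a b ab).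
    by move=> z hz; apply: isd_add; [exact: is_derive_hh|apply: isd_cmul; apply: dK; exact: hd].
  move=> z _; rewrite -lerBlDr sub0r lerNl.
  by apply: le_trans (ler_norm _) _; rewrite normrN; exact: hh_bound.
have h2 : c * K a - hh u1 u2 a <= c * K b - hh u1 u2 b.
  apply: (@mono_le (fun z => c * K z - hh u1 u2 z)
    (fun z => c * k z - C z * (u2 * X1 z - u1 * Y1 z) / s z ^+ 3) a b ab).
    by move=> z hz; apply: isd_sub; [apply: isd_cmul; apply: dK; exact: hd|exact: is_derive_hh].
  move=> z _; rewrite subr_ge0.
  exact: le_trans (ler_norm _) (hh_bound _ _ _).
rewrite ler_norml mulrBr; move: h1 h2; move: (hh u1 u2 a) (hh u1 u2 b) (c * K a) (c * K b) => p q r w.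
move=> h1 h2; apply/andP; split; lra.
Qed.


Let hh_lip2 u1 u2 p q : -1 < p -> -1 < q ->
  `|hh u1 u2 p - hh u1 u2 q| <= Num.sqrt (u1 ^+ 2 + u2 ^+ 2) * `|K p - K q|.
Proof.
move=> p1 q1; have [pq|qp] := leP p q.
  rewrite distrC [`|K p - K q|]distrC (ger0_norm (x := K q - K p)); first exact: hh_lip.
  by rewrite subr_ge0; apply: K_mono.
rewrite (ger0_norm (x := K p - K q)); first by apply: hh_lip => //; exact: ltW.
by rewrite subr_ge0; apply: K_mono => //; exact: ltW.
Qed.

Lemma sq_aux (r N d : R) : 0 <= r -> 0 <= d -> N = r ^+ 2 -> N <= r * d -> N <= d ^+ 2.
Proof.
move=> r0 d0 -> h; have [rd|dr] := leP r d.
  by rewrite ler_pXn2r // nnegrE.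
exfalso; have r0' : 0 < r by exact: le_lt_trans d0 dr.
by move: h; rewrite expr2 leNgt ltr_pM2l // dr.
Qed.

Let mid_bound a b m t : -1 < a -> a <= m <= b -> a <= t <= b ->
  K m = (K a + K b) / 2 ->
  1 - (K b - K a) ^+ 2 / 8 <= e1 m * e1 t + e2 m * e2 t.
Proof.
move=> a1 /andP [am mb] /andP [a_t tb] Km.
have t1 : -1 < t by apply: lt_le_trans a_t.
have m1 : -1 < m by apply: lt_le_trans am.
have Kat := K_mono a1 a_t.
have Ktb := K_mono t1 tb.
set v1 := e1 t - e1 m; set v2 := e2 t - e2 m.
have hN := hh_lip2 v1 v2 t1 m1.
have hhE : hh v1 v2 t - hh v1 v2 m = v1 ^+ 2 + v2 ^+ 2.
  by rewrite /hh /v1 /v2; move: (e1 t) (e1 m) (e2 t) (e2 m) => p q r w; ring.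
rewrite hhE ger0_norm ?addr_ge0 ?sqr_ge0 // in hN.
have dl : `|K t - K m| <= (K b - K a) / 2.
  rewrite ler_norml Km; move: (K a) (K b) (K t) Kat Ktb => p q r h1 h2.
  apply/andP; split; lra.
have := sq_aux (sqrtr_ge0 _) (normr_ge0 _) (esym (sqr_sqrtr (addr_ge0 (sqr_ge0 v1) (sqr_ge0 v2)))) hN.
have hu1 := e_unit t; have hu2 := e_unit m.
move: dl; rewrite /v1 /v2.
move: (e1 t) (e1 m) (e2 t) (e2 m) `|K t - K m| (K b - K a) (normr_ge0 (K t - K m)) hu1 hu2.
move=> p q r w dd A d0 hu1 hu2 h1 h2.
have : dd ^+ 2 <= (A / 2) ^+ 2 by rewrite ler_pXn2r // nnegrE // (le_trans d0 h1).
nra.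
Qed.


Let gfun (w1 w2 : R) (t : R) : R := w1 * x t + w2 * y t.

Let is_derive_g w1 w2 (t : R) :
  is_derive t 1 (gfun w1 w2) (s t * (w1 * e1 t + w2 * e2 t)).
Proof.
have h := isd_add (isd_cmul w1 (isd_d1 (@dx t))) (isd_cmul w2 (isd_d1 (@dy t))).
apply: is_derive_eq h _.
rewrite /e1 /e2 -/(X1 t) -/(Y1 t); have := s_neq0 t.
by move: (s t) (X1 t) (Y1 t) => p q r hp; field.
Qed.

Let chord_le a b w1 w2 be : -1 < a -> a <= b ->
  (forall t, a <= t <= b -> be <= w1 * e1 t + w2 * e2 t) ->
  be * (Lc b - Lc a) <= gfun w1 w2 b - gfun w1 w2 a.
Proof.
move=> a1 ab hb.
have h : gfun w1 w2 a - be * Lc a <= gfun w1 w2 b - be * Lc b.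
  apply: (@mono_le (fun z => gfun w1 w2 z - be * Lc z)
     (fun z => s z * (w1 * e1 z + w2 * e2 z) - be * s z) a b ab).
    move=> z /andP [h1 h2]; apply: isd_sub; first exact: is_derive_g.
    by apply: isd_cmul; apply: dL; apply: lt_le_trans h1.
  move=> z /andP [h1 h2].
  have hz : a <= z <= b by rewrite !ltW.
  have := hb z hz; have := s_gt0 z.
  move: (s z) (w1 * e1 z + w2 * e2 z) => p q hp hq; nra.
by move: h; move: (gfun w1 w2 a) (gfun w1 w2 b) (Lc a) (Lc b) => p q r w h; lra.
Qed.

Let chord_lt a b w1 w2 : -1 < a -> a < b ->
  (forall t, a <= t <= b -> 0 < w1 * e1 t + w2 * e2 t) ->
  gfun w1 w2 a < gfun w1 w2 b.
Proof.
move=> a1 ab hb.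
apply: (@mono_lt (gfun w1 w2) (fun z => s z * (w1 * e1 z + w2 * e2 z)) a b ab).
  by move=> z _; exact: is_derive_g.
move=> z /andP [h1 h2]; rewrite mulr_gt0 //; apply: hb; rewrite !ltW //.
Qed.

Let gdist a b w1 w2 : w1 ^+ 2 + w2 ^+ 2 = 1 ->
  gfun w1 w2 b - gfun w1 w2 a <= curve_dist x y b a.
Proof.
move=> hw; rewrite /curve_dist /gfun.
apply: le_trans (ler_norm _) _.
rewrite -sqrtr_sqr ler_sqrt; last by rewrite addr_ge0 // sqr_ge0.
have := sqr_ge0 (w1 * (y b - y a) - w2 * (x b - x a)).
move: hw; move: (x a) (x b) (y a) (y b) => p q r u hw h.
have e : (w1 * q + w2 * u - (w1 * p + w2 * r)) ^+ 2 = (w1 ^+ 2 + w2 ^+ 2) * ((q - p) ^+ 2 + (u - r) ^+ 2)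
   - (w1 * (u - r) - w2 * (q - p)) ^+ 2 by ring.
rewrite hw mul1r in e; rewrite e; lra.
Qed.


Let cK a b : -1 < a -> {within `[a, b], continuous K}.
Proof.
move=> a1; apply: derivable_within_continuous => z; rewrite in_itv /= => /andP [h1 _].
by have [] := dK (lt_le_trans a1 h1).
Qed.

Let ivtK a b v : -1 < a -> a <= b -> K a <= v <= K b -> exists2 c, a <= c <= b & K c = v.
Proof.
move=> a1 ab hv.
have hm : Num.min (K a) (K b) <= v <= Num.max (K a) (K b).
  by rewrite min_l ?max_r // (K_mono a1 ab).
have [c hc e] := IVT ab (@cK a b a1) hm.
by exists c => //; move: hc; rewrite in_itv.
Qed.

Let core (T : R) : 0 < T -> x T = x 0 -> y T = y 0 ->
  exists b, [/\ 0 < b, b <= T, K b - K 0 = 13 / 10 &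
    (631 / 800) * (Lc b - Lc 0) <= curve_dist x y b 0].
Proof.
move=> T0 xT yT.
have m10 : -1 < (0 : R) by rewrite oppr_lt0.
have KT : 13 / 10 <= K T - K 0.
  rewrite leNgt; apply/negP => hlt.
  have K0T := K_mono m10 (ltW T0).
  have [m hm Km] := @ivtK 0 T ((K 0 + K T) / 2) m10 (ltW T0) ltac:(apply/andP; split; lra).
  have hpos : forall t, 0 <= t <= T -> 0 < e1 m * e1 t + e2 m * e2 t.
    move=> t ht; have := mid_bound m10 hm ht Km.
    apply: lt_le_trans.
    move: hlt K0T; move: (K T) (K 0) => p q h1 h2.
    have : (p - q) ^+ 2 < (13 / 10) ^+ 2.
      by rewrite ltr_pXn2r // nnegrE; lra.
    lra.
  have := chord_lt m10 T0 hpos.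
  by rewrite /gfun xT yT ltxx.
have [b hb Kb] := @ivtK 0 T (K 0 + 13 / 10) m10 (ltW T0) ltac:(apply/andP; split; lra).
case/andP: hb => b0 bT.
have [m hm Km] := @ivtK 0 b (K 0 + 13 / 20) m10 b0 ltac:(apply/andP; split; lra).
exists b; split => //.
- rewrite lt_def b0 andbT; apply/eqP => eb; move: Kb; rewrite -eb; lra.
- by rewrite Kb; lra.
have hbnd : forall t, 0 <= t <= b -> 631 / 800 <= e1 m * e1 t + e2 m * e2 t.
  move=> t ht; have := mid_bound m10 hm ht ltac:(rewrite Km Kb; lra).
  apply: le_trans.
  rewrite Kb; lra.
apply: le_trans (chord_le m10 b0 hbnd) _.
apply: gdist; exact: e_unit.
Qed.


Lemma cont_const_mul (c : R) (f : R -> R) : continuous f -> continuous (fun t => c * f t).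
Proof. by move=> cf; apply: cont_mul => //; exact: cst_continuous. Qed.

Let int_export (b al be : R) : 0 < b ->
  (\int[lebesgue_measure]_(t in `[0%R, b]) (al * k t + be * s t)%:E =
   (al * (K b - K 0) + be * (Lc b - Lc 0))%:E)%E.
Proof.
move=> b0.
have m10 : -1 < (0 : R) by rewrite oppr_lt0.
have dF (z : R) : 0 <= z -> is_derive z 1 (fun t => al * K t + be * Lc t) (al * k z + be * s z).
  move=> z0; have z1 : -1 < z by apply: lt_le_trans z0.
  exact: (isd_add (isd_cmul al (dK z1)) (isd_cmul be (dL z1))).
rewrite (@continuous_FTC2 R (fun t => al * k t + be * s t) (fun t => al * K t + be * Lc t) 0 b b0).
- by rewrite -EFinB; congr (_%:E); lra.
- apply: continuous_subspaceT; apply: cont_add; apply: cont_const_mul; [exact: ck|exact: cs].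
- split.
  + move=> z; rewrite in_itv /= => /andP [z0 _]; have [] := dF z (ltW z0); done.
  + apply: cvg_at_right_filter; have [h _] := dF 0 (lexx _); exact: (der_cont h).
  + apply: cvg_at_left_filter; have [h _] := dF b (ltW b0); exact: (der_cont h).
- move=> z; rewrite in_itv /= => /andP [z0 _]; rewrite derive1E.
  by have [] := dF z (ltW z0).
Qed.

Lemma core_final (T : R) : 0 < T -> x T = x 0 -> y T = y 0 ->
  exists b L, [/\ 0 < b, b <= T, 631 / 800 * L <= curve_dist x y b 0 &
    forall al be : R, (\int[lebesgue_measure]_(t in `[0%R, b])
      (al * (`|curvature x y t| * speed x y t) + be * speed x y t)%:E =
      (al * (13 / 10) + be * L)%:E)%E].
Proof.
move=> T0 xT yT; have [b [b0 bT Kb hL]] := core T0 xT yT.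
exists b, (Lc b - Lc 0); split => // al be.
by rewrite (int_export al be b0) Kb.
Qed.

Lemma curv_cont : continuous (curvature x y). Proof. exact: ccurv. Qed.
Lemma speed_cont : continuous (speed x y). Proof. exact: cs. Qed.
Lemma speed_pos t : 0 < speed x y t. Proof. exact: s_gt0. Qed.

End Core.

Lemma ln_le_sub1 (R : realType) (u : R) : 0 < u -> ln u <= u - 1.
Proof.
move=> u0; have := expR_ge1Dx (ln u); rewrite lnK ?posrE //; lra.
Qed.

Lemma bernoulli (R : realType) (t q : R) : 0 <= t -> 1 <= q -> q * t - (q - 1) <= powR t q.
Proof.
move=> t0 q1; have [->|tp] := eqVneq t 0.
  by rewrite powR0 ?gt_eqF ?(lt_le_trans ltr01) //; lra.
have t0' : 0 < t by rewrite lt_def tp t0.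
rewrite -mulr_powRB1 ?(lt_le_trans ltr01) //.
have e : powR t (q - 1) = expR ((q - 1) * ln t).
  by rewrite /powR (negbTE tp).
rewrite e.
have h1 := expR_ge1Dx ((q - 1) * ln t).
have h2 : 1 - t^-1 <= ln t.
  have ti : 0 < t^-1 by rewrite invr_gt0.
  have := ln_le_sub1 ti; rewrite lnV ?posrE //; lra.
have h3 : t - 1 <= t * ln t.
  have := ler_wpM2l (ltW t0') h2; rewrite mulrBr mulr1 mulfV //.
have : t * (1 + (q - 1) * ln t) <= t * expR ((q - 1) * ln t) by rewrite ler_wpM2l // ltW.
clear e h1 h2; move: (expR ((q - 1) * ln t)) => E; move: (ln t) h3 => l h3 h.
have : 0 <= q - 1 by lra.
nra.
Qed.

Lemma young (R : realType) (a d q : R) : 0 <= a -> 0 < d -> 1 <= q ->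
  powR d (1 - q) * (q * a - (q - 1) / d) <= powR a q.
Proof.
move=> a0 d0 q1.
have dn : d != 0 by rewrite gt_eqF.
have eP : powR d (1 - q) = d * powR d (- q).
  by rewrite powRD ?dn ?implybT // powRr1 // ltW.
have eA : powR a q = powR (a * d) q * powR d (- q).
  rewrite powRM ?mulr_ge0 // ?ltW // -mulrA -powRD ?dn ?implybT //.
  by rewrite subrr powRr0 mulr1.
rewrite eP eA.
have := bernoulli (mulr_ge0 a0 (ltW d0)) q1.
have := powR_ge0 d (- q).
move: (powR d (-q)) (powR (a * d) q) => p w hp h.
have -> : d * p * (q * a - (q - 1) / d) = p * (q * (a * d) - (q - 1)).
  by field.
by rewrite mulrC ler_wpM2r.
Qed.

Lemma arith (R : realType) (q r : R) : 1 < q -> r <= 800 / 631 ->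
  1 <= q * (13 / 10) - (q - 1) * r.
Proof.
move=> q1 r1; have h0 : 0 <= q - 1 by lra.
have h1 : 0 <= 800 / 631 - r by lra.
have h := mulr_ge0 h0 h1.
rewrite mulrBr in h; move: h; move: ((q - 1) * r) => w h; lra.
Qed.

Theorem lemmaA1 (R : realType) (q : R) (x y : R -> R) (T : R) :
  1 <= q ->
  closed_regular_C2_curve x y T ->
  ((powR (curve_diam x y) (1 - q))%:E <= curvature_energy x y T q)%E.
Proof.
move=> q1 [T0 [per [dxy [ddxy [[c2x c2y] D0]]]]].
have dx t : derivable x t 1 := (dxy t).1.
have dy t : derivable y t 1 := (dxy t).2.
have ddx t : derivable (derive1 x) t 1 := (ddxy t).1.
have ddy t : derivable (derive1 y) t 1 := (ddxy t).2.
have [xT yT] := per 0; rewrite add0r in xT yT.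
have [b [L [b0 bT hL hint]]] := core_final dx dy ddx ddy c2x c2y D0 T0 xT yT.
have ccurv := curv_cont ddx ddy c2x c2y D0.
have cspeed := speed_cont ddx ddy.
have spos := speed_pos D0.
set F := fun t => powR `|curvature x y t| q * speed x y t.
have F0 t : 0 <= F t by rewrite /F mulr_ge0 ?powR_ge0 // ltW.
have mFT : measurable_fun setT F.
  apply: measurable_funM; last exact: continuous_measurable_fun.
  exact: (measurableT_comp (measurable_powR q) (continuous_measurable_fun (cont_norm ccurv))).
have step1 : (\int[lebesgue_measure]_(t in `[0%R, b]) (F t)%:E <= curvature_energy x y T q)%E.
  rewrite /curvature_energy /=.
  apply: ge0_subset_integral => //.
  - apply/measurable_EFinP; exact: measurable_funS mFT.
  - by move=> t _; rewrite lee_fin.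
  - by apply: subset_itv; rewrite bnd_simp.
have [q1e|qn1] := eqVneq q 1.
  have -> : powR (curve_diam x y) (1 - q) = 1 by rewrite q1e subrr powRr0.
  apply: (le_trans _ step1).
  have -> : (\int[lebesgue_measure]_(t in `[0%R, b]) (F t)%:E =
     \int[lebesgue_measure]_(t in `[0%R, b])
        (1 * (`|curvature x y t| * speed x y t) + 0 * speed x y t)%:E)%E.
    apply: eq_integral => t _; congr (_%:E).
    by rewrite /F q1e powRr1 ?normr_ge0 // mul1r mul0r addr0.
  by rewrite hint lee_fin; lra.
have q1' : 1 < q by rewrite lt_def qn1 q1.
set d := curve_diam x y.
have [[dpos hd]|d0] : (0 < d /\ curve_dist x y b 0 <= d) \/ d = 0.
  have [ub|nub] := pselect (has_ubound [set d | exists s t, d = curve_dist x y s t]).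
    have hd : curve_dist x y b 0 <= d.
      by apply: (ub_le_sup ub); exists b, 0.
    have d_ge0 : 0 <= d by apply: le_trans hd; exact: sqrtr_ge0.
    have [->|dn] := eqVneq d 0; first by right.
    by left; split => //; rewrite lt_def dn d_ge0.
  right; rewrite /d /curve_diam sup_out //.
  by move=> [_ h]; exact: nub h.
  2: { rewrite d0 powR0; last by rewrite subr_eq0 eq_sym qn1.
       rewrite /curvature_energy /=; apply: integral_ge0 => t _.
       by rewrite lee_fin; exact: F0. }
set P := powR d (1 - q).
have P0 : 0 < P := powR_gt0 _ dpos.
have hY := hint (P * q) (- (P * (q - 1) / d)).
set Y := fun t => P * q * (`|curvature x y t| * speed x y t) + - (P * (q - 1) / d) * speed x y t.
have hpt t : Y t <= F t.
  rewrite /Y /F; have := young (normr_ge0 (curvature x y t)) dpos q1.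
  have := spos t; rewrite -/P.
  move: (speed x y t) `|curvature x y t| (powR `|curvature x y t| q) => sp a pw sp0 h.
  have -> : P * q * (a * sp) + - (P * (q - 1) / d) * sp = (P * (q * a - (q - 1) / d)) * sp.
    by rewrite mulrBr mulrBl; ring.
  by rewrite ler_wpM2r // ltW.
have mb : measurable (`[0%R, b] : set R) by exact: measurable_itv.
have step2 : (\int[lebesgue_measure]_(t in `[0%R, b]) (Y t)%:E <=
              \int[lebesgue_measure]_(t in `[0%R, b]) (F t)%:E)%E.
  have [finF|] := ltP (\int[lebesgue_measure]_(t in `[0%R, b]) (F t)%:E)%E +oo%E; last first.
    by rewrite leye_eq => /eqP ->; exact: leey.
  apply: le_integral => //.
  - apply: continuous_compact_integrable; first exact: segment_compact.
    apply: continuous_subspaceT; apply: cont_add; apply: cont_const_mul => //.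
    exact: cont_mul (cont_norm ccurv) cspeed.
  - apply/integrableP; split.
      apply/measurable_EFinP; exact: measurable_funS mFT.
    under eq_integral => t _ do rewrite gee0_abs ?lee_fin //.
    exact: finF.
  - by move=> t _; rewrite lee_fin.
apply: (le_trans _ step1); apply: (le_trans _ step2).
rewrite hY lee_fin.
have hL' : L <= 800 / 631 * d.
  move: hL hd; move: (curve_dist x y b 0) => c h1 h2; lra.
have -> : P * q * (13 / 10) + - (P * (q - 1) / d) * L = P * (q * (13 / 10) - (q - 1) * (L / d)).
  by field; rewrite gt_eqF.
rewrite -[leLHS]mulr1 ler_pM2l //.
have r : L / d <= 800 / 631 by rewrite ler_pdivrMr // mulrC.
exact: (arith q1' r).
Qed.
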